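(* Let $X$ be a non-discrete Tychonoff space with $P$-number $\tau$, and suppose $X$ has a $\tau$-discrete basis of clopen sets. Then for every positive integer $n$, the $P$-number of $X^n$ is $\tau$ and $X^n$ has a $\tau$-discrete basis of clopen sets.
   Context: All spaces are Tychonoff. The $P$-number of a space $Z$ is $|Z|$ if $Z$ is discrete; otherwise it is the largest cardinal $\tau$ such that the intersection of any family of fewer than $\tau$ open subsets of $Z$ is open. A family of subsets of $Z$ is discrete if every point of $Z$ has a neighborhood meeting at most one member of the family. A $\tau$-discrete basis of clopen sets is a base for the topology of the form $\bigcup_{\alpha<\tau}\mathcal B_\alpha$ consisting of clopen sets, with each $\mathcal B_\alpha$ a discrete family. *)

(* Defs.v *)
From HB Require Import structures.
From mathcomp Require Import all_boot all_order all_algebra.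
From mathcomp Require Import all_classical all_reals all_analysis.
From mathcomp Require Import Rstruct Rstruct_topology.
From Stdlib Require Import Rdefinitions.

Set Implicit Arguments.
Unset Strict Implicit.
Unset Printing Implicit Defensive.

Local Open Scope classical_set_scope.

(* Cardinals are represented by (index) types:
   the cardinal of a type K is |K|, compared via [set: J] #<= [set: K]. *)

Definition card_lt (J K : Type) : Prop :=
  ([set: J] #<= [set: K])%card /\ ~ ([set: K] #<= [set: J])%card.

Definition completely_regular (T : topologicalType) : Prop :=
  forall (A : set T) (x : T), closed A -> ~ A x ->
    exists f : T -> R, continuous f /\ f x = 0%R /\ (forall a, A a -> f a = 1%R).

Definition tychonoff_space (T : topologicalType) : Prop :=
  accessible_space T /\ completely_regular T.

Definition discrete_top (Z : topologicalType) : Prop := forall A : set Z, open A.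

Definition small_intersections_open (Z : topologicalType) (K : Type) : Prop :=
  forall (J : Type) (U : J -> set Z), card_lt J K ->
    (forall j, open (U j)) -> open (\bigcap_(j in [set: J]) U j).

Definition pnumber_is (Z : topologicalType) (K : Type) : Prop :=
  (discrete_top Z -> ([set: Z] #= [set: K])%card) /\
  (~ discrete_top Z ->
     small_intersections_open Z K /\
     (forall K' : Type, card_lt K K' -> ~ small_intersections_open Z K')).

Definition discrete_family (Z : topologicalType) (F : set (set Z)) : Prop :=
  forall x : Z, exists V : set Z, nbhs x V /\
    (forall A B, F A -> F B -> A `&` V !=set0 -> B `&` V !=set0 -> A = B).

Definition has_discrete_clopen_basis (Z : topologicalType) (K : Type) : Prop :=
  exists B : K -> set (set Z),
    (forall a, discrete_family (B a)) /\
    (forall a U, B a U -> clopen U) /\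
    basis (\bigcup_(a in [set: K]) B a).

(* Main.v *)
Require Import Defs.
From HB Require Import structures.
From mathcomp Require Import all_boot all_order all_algebra.
From mathcomp Require Import all_classical all_reals all_analysis.
From Stdlib Require ClassicalEpsilon.

Local Open Scope classical_set_scope.

Definition epick {T : Type} (t0 : T) (P : T -> Prop) : T :=
  ClassicalEpsilon.epsilon (inhabits t0) P.
Lemma epickP {T : Type} (t0 : T) (P : T -> Prop) : (exists x, P x) -> P (epick t0 P).
Proof. exact: ClassicalEpsilon.epsilon_spec. Qed.

Lemma cardleP (J K : Type) :
  ([set: J] #<= [set: K])%card <-> exists f : J -> K, injective f.
Proof.
split.
  move/card_leP=> [F].
  exists (fun j => val (F (SigSub (mem_set (I : [set: J] j))))).
  move=> x y /= /val_inj.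
  by move=> /(@inj _ _ _ F (SigSub _) (SigSub _) (mem_set I) (mem_set I)) /(congr1 val).
move=> [f finj]; apply/card_leP; apply/injfunPex.
exists (fun x => SigSub (mem_set (I : [set: K] (f (val x))))) => //.
move=> x y _ _ /(congr1 val) /= /finj; exact: val_inj.
Qed.

Lemma compare_sets (T : Type) (t0 : T) (A B : set T) :
  (exists f : T -> T, (forall x, A x -> B (f x)) /\
     (forall x y, A x -> A y -> f x = f y -> x = y)) \/
  (exists g : T -> T, (forall x, B x -> A (g x)) /\
     (forall x y, B x -> B y -> g x = g y -> x = y)).
Proof.
pose P := [set H : set (T * T) | (forall p, H p -> A p.1 /\ B p.2) /\
  (forall x y y', H (x, y) -> H (x, y') -> y = y') /\
  (forall x x' y, H (x, y) -> H (x', y) -> x = x')].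
have [H [[HAB [Hf Hi]] Hmax]] : exists H, P H /\ forall C, H `<` C -> ~ P C.
  apply: Zorn_bigcup => F FP Ftot; split; [|split].
  - by move=> p [H1 F1 H1p]; apply: (FP _ F1).1.
  - move=> x y y' [H1 F1 H1xy] [H2 F2 H2xy'].
    have [s|s] := Ftot _ _ F1 F2.
      by apply: (FP _ F2).2.1 x y y' (s _ H1xy) H2xy'.
    by apply: (FP _ F1).2.1 x y y' H1xy (s _ H2xy').
  - move=> x x' y [H1 F1 H1xy] [H2 F2 H2xy'].
    have [s|s] := Ftot _ _ F1 F2.
      by apply: (FP _ F2).2.2 x x' y (s _ H1xy) H2xy'.
    by apply: (FP _ F1).2.2 x x' y H1xy (s _ H2xy').
have [dom|ndom] := pselect (forall x, A x -> exists y, H (x, y)).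
  left; exists (fun x => epick t0 (fun y => H (x, y))); split.
    by move=> x /dom /(epickP t0) /HAB [].
  move=> x y /dom /(epickP t0) Hx /dom /(epickP t0) Hy e.
  by rewrite e in Hx; apply: Hi Hx Hy.
have [rng|nrng] := pselect (forall y, B y -> exists x, H (x, y)).
  right; exists (fun y => epick t0 (fun x => H (x, y))); split.
    by move=> x /rng /(epickP t0) /HAB [].
  move=> x y /rng /(epickP t0) Hx /rng /(epickP t0) Hy e.
  by rewrite e in Hx; apply: Hf Hx Hy.
exfalso.
move/existsNP: ndom => [a /not_implyP [Aa /forallNP na]].
move/existsNP: nrng => [b /not_implyP [Bb /forallNP nb]].
apply: (Hmax (H `|` [set (a, b)])).
  split; first by move=> p Hp; left.
  by move=> /(_ (a, b) (or_intror erefl)); apply: na.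
split; [|split].
- by move=> p [/HAB//|->].
- move=> x y y' [H1|[e1 e2]] [H2|[e3 e4]]; subst.
  + exact: Hf H1 H2.
  + by exfalso; apply: (na y).
  + by exfalso; apply: (na y').
  + by [].
- move=> x x' y [H1|[e1 e2]] [H2|[e3 e4]]; subst.
  + exact: Hi H1 H2.
  + by exfalso; apply: (nb x).
  + by exfalso; apply: (nb x').
  + by [].
Qed.


Definition hstate (T : Type) (e : nat -> T) (A : set ((T * T * T) + T)) : Prop :=
 (forall x y z z', A (inl (x,y,z)) -> A (inl (x,y,z')) -> z = z') /\
 (forall x y x' y' z, A (inl (x,y,z)) -> A (inl (x',y',z)) -> x = x' /\ y = y') /\
 (forall x y z, A (inl (x,y,z)) -> A (inr x) /\ A (inr y) /\ A (inr z)) /\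
 (forall x y, A (inr x) -> A (inr y) -> exists z, A (inl (x,y,z))) /\
 ((forall s, ~ A (inr s)) \/ (A (inr (e 0%N)) /\ A (inr (e 1%N)) /\ A (inr (e 2%N)))).

Arguments hstate {T}.

Lemma hstate_chain (T : Type) (e : nat -> T) (F : set (set ((T * T * T) + T))) :
  F `<=` hstate e -> total_on F subset -> hstate e (\bigcup_(X in F) X).
Proof.
move=> FP Ftot; split; [|split; [|split; [|split]]].
- move=> x y z z' [H1 F1 H1p] [H2 F2 H2p].
  have [s|s] := Ftot _ _ F1 F2.
    by apply: (FP _ F2).1 (s _ H1p) H2p.
  by apply: (FP _ F1).1 H1p (s _ H2p).
- move=> x y x' y' z [H1 F1 H1p] [H2 F2 H2p].
  have [s|s] := Ftot _ _ F1 F2.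
    by apply: (FP _ F2).2.1 (s _ H1p) H2p.
  by apply: (FP _ F1).2.1 H1p (s _ H2p).
- move=> x y z [H1 F1 H1p].
  have [a [b c]] := (FP _ F1).2.2.1 _ _ _ H1p.
  by split; [|split]; exists H1.
- move=> x y [H1 F1 H1p] [H2 F2 H2p].
  have [s|s] := Ftot _ _ F1 F2.
    have [z hz] := (FP _ F2).2.2.2.1 _ _ (s _ H1p) H2p.
    by exists z, H2.
  have [z hz] := (FP _ F1).2.2.2.1 _ _ H1p (s _ H2p).
  by exists z, H1.
- have [[X FX [s Xs]]|N] := pselect (exists2 X, F X & exists s, X (inr s)).
    right; have [/(_ s)//|[a [b c]]] := (FP _ FX).2.2.2.2.
    by split; [|split]; exists X.
  left=> s [X FX Xs]; apply: N; exists X => //; by exists s.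
Qed.


Lemma hessenberg (T : Type) (e : nat -> T) : injective e ->
  exists F : T -> T -> T, forall x y x' y', F x y = F x' y' -> x = x' /\ y = y'.
Proof.
move=> einj.
pose A0 : set ((T*T*T)+T) := fun u => match u with
  | inl (x,y,z) => exists i j, [/\ x = e i, y = e j & z = e (pickle (i,j))]
  | inr s => exists i, s = e i end.
have QA0 : hstate e A0.
  split; [|split; [|split; [|split]]].
  - move=> x y z z' [i [j [-> -> ->]]] [i' [j' [/einj ei /einj ej ->]]].
    by rewrite ei ej.
  - move=> x y x' y' z [i [j [-> -> ->]]] [i' [j' [-> -> /einj /(pcan_inj pickleK_inv)]]].
    by case=> -> ->.
  - move=> x y z [i [j [-> -> ->]]].
    by split; [exists i|split; [exists j|exists (pickle (i, j))]].
  - move=> x y [i ->] [j ->]; exists (e (pickle (i, j))); by exists i, j.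
  - by right; split; [exists 0%N|split; [exists 1%N|exists 2%N]].
have [A [QA Amax]] := Zorn_bigcup (@hstate_chain T e).
case: QA => [Af [Ai [AS [Ad Ae]]]].
have [Anil | [S0 [S1 S2]]] := Ae.
  exfalso; apply: (Amax A0) => //; split.
    move=> [[[x y] z]|s] H; last by have := Anil s H.
    by have [/Anil] := AS _ _ _ H.
  by move=> /(_ (inr (e 0%N))) H; apply: (Anil (e 0%N)); apply: H; exists 0%N.
pose S := fun s => A (inr s).
pose g x y := epick (e 0%N) (fun z => A (inl (x,y,z))).
have gA x y : S x -> S y -> A (inl (x,y,g x y)).
  by move=> hx hy; exact: (epickP (e 0%N) (fun z => A (inl (x,y,z))) (Ad _ _ hx hy)).
have gS x y : S x -> S y -> S (g x y).
  by move=> hx hy; have [_ [_]] := AS _ _ _ (gA _ _ hx hy).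
have ginj x y x' y' : S x -> S y -> S x' -> S y' -> g x y = g x' y' ->
    x = x' /\ y = y'.
  move=> hx hy hx' hy' exy; apply: (Ai _ _ _ _ (g x y)); first exact: gA.
  by rewrite exy; exact: gA.
have [[h [hS hinj]] | [j [jS jinj]]] := @compare_sets _ (e 0%N) S (~` S); last first.
  pose phi x := if pselect (S x) then g x (e 0%N) else g (j x) (e 1%N).
  have phiS x : S (phi x).
    by rewrite /phi; case: pselect => hx; apply: gS => //; exact: jS.
  have phiinj x x' : phi x = phi x' -> x = x'.
    rewrite /phi; case: (pselect (S x)) => hx; case: (pselect (S x')) => hx'.
    - by move/ginj => /(_ hx S0 hx' S0) [].
    - by move/ginj => /(_ hx S0 (jS _ hx') S1) [_ /einj].
    - by move/ginj => /(_ (jS _ hx) S1 hx' S0) [_ /einj].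
    - move/ginj => /(_ (jS _ hx) S1 (jS _ hx') S1) [+ _].
      exact: jinj.
  exists (fun x y => g (phi x) (phi y)) => x y x' y'.
  by move=> /(ginj _ _ _ _ (phiS x) (phiS y) (phiS x') (phiS y')) [/phiinj -> /phiinj ->].
exfalso.
pose C y := exists2 s, S s & y = h s.
pose hinv y := epick (e 0%N) (fun s => S s /\ h s = y).
have CnS y : C y -> ~ S y by case=> s Ss ->; apply: hS.
have hinvP y : C y -> S (hinv y) /\ h (hinv y) = y.
  by case=> s Ss ->; apply: (epickP (e 0%N) (fun s' => S s' /\ h s' = h s)); exists s.
pose r x := if pselect (S x) then x else hinv x.
pose S' x := S x \/ C x.
have rS x : S' x -> S (r x).
  by rewrite /r; case: pselect => // hx [//|/hinvP[]].
have rE x : S x -> r x = x by rewrite /r; case: pselect.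
have rE' x : C x -> h (r x) = x.
  move=> cx; rewrite /r; case: pselect => [hx|hx] /=; first by exfalso; exact: CnS _ cx hx.
  exact: (hinvP _ cx).2.
have rinj x x' : S' x -> S' x' -> (S x <-> S x') -> r x = r x' -> x = x'.
  move=> sx sx' iff exx.
  have [hx|hx] := pselect (S x).
    by rewrite -(rE _ hx) exx rE //; apply/iff.
  have cx : C x by case: sx.
  have cx' : C x' by case: sx' => // /iff.
  by rewrite -(rE' _ cx) exx rE'.
pose tag x y := if pselect (S x) then e 0%N
  else if pselect (S y) then e 1%N else e 2%N.
have tagS x y : S (tag x y) by rewrite /tag; do 2 case: pselect.
pose nz x y := h (g (tag x y) (g (r x) (r y))).
have nzC x y : S' x -> S' y -> C (nz x y).
  move=> sx sy; exists (g (tag x y) (g (r x) (r y))) => //.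
  by apply: (gS) => //; apply: (gS); apply: (rS).
pose B : set ((T*T*T)+T) := A `|` (fun u => match u with
  | inl (x,y,z) => [/\ S' x, S' y, ~ (S x /\ S y) & z = nz x y]
  | inr s => C s end).
apply: (Amax B).
  split; first by move=> u Au; left.
  move=> /(_ (inr (h (e 0%N)))) H.
  have : B (inr (h (e 0%N))) by right; exists (e 0%N).
  by move/H; apply: hS.
split; [|split; [|split; [|split]]].
- move=> x y z z' [H1|[sx sy nxy ->]] [H2|[sx' sy' nxy' ->]].
  + exact: Af H1 H2.
  + by exfalso; have [? [? _]] := AS _ _ _ H1; apply: nxy'.
  + by exfalso; have [? [? _]] := AS _ _ _ H2; apply: nxy.
  + by [].
- move=> x y x' y' z [H1|[sx sy nxy ->]] [H2|[sx' sy' nxy' e']].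
  + exact: Ai H1 H2.
  + exfalso; have [_ [_ Sz]] := AS _ _ _ H1.
    by apply: (CnS z) => //; rewrite e'; apply: nzC.
  + exfalso; have [_ [_ Sz]] := AS _ _ _ H2.
    by apply: (CnS (nz x y)) => //; apply: nzC.
  + move: e'; rewrite /nz => /hinj.
    have gg u v : S' u -> S' v -> S (g (tag u v) (g (r u) (r v))).
      by move=> su sv; apply: (gS) => //; apply: (gS); apply: (rS).
    move=> /(_ (gg _ _ sx sy) (gg _ _ sx' sy')).
    move=> /(ginj _ _ _ _ (tagS _ _) (gS _ _ (rS _ sx) (rS _ sy)) (tagS _ _) (gS _ _ (rS _ sx') (rS _ sy'))) [et].
    move=> /(ginj _ _ _ _ (rS _ sx) (rS _ sy) (rS _ sx') (rS _ sy')) [ex ey].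
    move: et; rewrite /tag.
    case: (pselect (S x)) => hx; case: (pselect (S y)) => hy;
    case: (pselect (S x')) => hx'; case: (pselect (S y')) => hy' /einj et;
    try discriminate; try (exfalso; tauto);
    by split; apply: rinj => //; tauto.
- move=> x y z [H1|[sx sy nxy ->]].
  + by have [a [b c]] := AS _ _ _ H1; split; [left|split; left].
  + split; [|split]; last by right; apply: nzC.
    * by case: sx => ?; [left|right].
    * by case: sy => ?; [left|right].
- move=> x y bx by'.
  have [[hx hy]|nxy] := pselect (S x /\ S y).
    by have [z hz] := Ad _ _ hx hy; exists z; left.
  exists (nz x y); right; split.
  + by case: bx => ?; [left|right].
  + by case: by' => ?; [left|right].
  + exact: nxy.
  + by [].
- by right; split; [left|split; left].
Qed.


Lemma fin_inter_open (X : topologicalType) (J : Type) (U : J -> set X) :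
  finite_set [set: J] -> (forall j, open (U j)) ->
  open (\bigcap_(j in [set: J]) U j).
Proof.
elim/Pchoice: J U => J U fin oU.
have [D HD] := finite_fsetP.1 fin.
rewrite openE => x Ax; rewrite /interior /=.
rewrite HD; apply: filter_bigI => i _.
by apply: open_nbhs_nbhs; split => //; apply: Ax.
Qed.

Lemma K_infinite (X : topologicalType) (K : Type) :
  ~ discrete_top X -> pnumber_is X K -> exists e : nat -> K, injective e.
Proof.
move=> nd [_ /(_ nd) [_ Hmax]].
apply/cardleP; apply: contrapT => nle.
have finK : finite_set [set: K] := (finite_setPn _).2 nle.
apply: (Hmax nat); first by split => //; exact: finite_set_countable.
move=> J U [_ nJ] oU; apply: fin_inter_open => //; exact/finite_setPn.
Qed.

Lemma rv_nbhs (X : topologicalType) n (M : 'rV[X]_n) (A : set 'rV[X]_n) :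
  nbhs M A <-> exists P : 'I_n -> set X, (forall k, nbhs (M ord0 k) (P k)) /\
    (forall N : 'rV[X]_n, (forall k, P k (N ord0 k)) -> A N).
Proof.
split.
  move=> [P hP sub]; exists (P ord0); split => // N hN; apply: sub => i k.
  by rewrite (ord1 i).
move=> [P [hP sub]]; exists (fun _ k => P k).
  by move=> i k; rewrite (ord1 i).
by move=> N hN; apply: sub => k; apply: hN.
Qed.

Lemma rproj_open (X : topologicalType) n (j : 'I_n) (A : set X) :
  open A -> open [set M : 'rV[X]_n | A (M ord0 j)].
Proof.
rewrite !openE => oA M AM; rewrite /interior /=; apply/rv_nbhs.
exists (fun k => if k == j then A else setT); split.
  move=> k; case: eqP => [->|_]; last exact: filterT.
  exact: oA.
by move=> N /(_ j); rewrite eqxx.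
Qed.

Lemma proj_open_back (X : topologicalType) n (j : 'I_n) (A : set X) :
  open [set M : 'rV[X]_n | A (M ord0 j)] -> open A.
Proof.
rewrite !openE => H x Ax.
pose upd (y : X) : 'rV[X]_n := (\row_k (if k == j then y else x))%R.
have : [set M : 'rV[X]_n | A (M ord0 j)] (upd x) by rewrite /= /upd mxE; case: eqP.
move/H; rewrite /interior /= => /rv_nbhs [P [hP sub]].
have hPj := hP j; rewrite /upd mxE eqxx in hPj.
apply: filterS hPj => y Py.
have := sub (upd y); rewrite /upd /= mxE eqxx; apply => k.
rewrite mxE; case: eqP => [->//|_].
by have := hP k; rewrite mxE; case: eqP => _ /nbhs_singleton.
Qed.


Lemma rv_not_discrete (X : topologicalType) n : (0 < n)%N ->
  ~ discrete_top X -> ~ discrete_top 'rV[X]_n.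
Proof.
move=> n0 nd dY; apply: nd => A.
exact: (@proj_open_back X n (Ordinal n0)).
Qed.

Lemma rv_small (X : topologicalType) (K : Type) n :
  small_intersections_open X K -> small_intersections_open 'rV[X]_n K.
Proof.
move=> sX J U cJ oU; rewrite openE => M UM.
have : forall j, exists P : 'I_n -> set X, (forall k, nbhs (M ord0 k) (P k)) /\
    (forall N : 'rV[X]_n, (forall k, P k (N ord0 k)) -> U j N).
  move=> j; apply/rv_nbhs; have := oU j; rewrite openE; apply.
  exact: UM.
move/choice => [P hP].
rewrite /interior /=; apply/rv_nbhs.
exists (fun k => \bigcap_(j in [set: J]) (P j k)°); split.
  move=> k; apply: open_nbhs_nbhs; split.
    by apply: sX => // j; exact: open_interior.
  by move=> j _; exact: (hP j).1.
move=> N hN j _; apply: (hP j).2 => k.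
by apply: interior_subset; apply: hN.
Qed.

Lemma rv_max (X : topologicalType) (K' : Type) n : (0 < n)%N ->
  small_intersections_open 'rV[X]_n K' -> small_intersections_open X K'.
Proof.
move=> n0 sY J U cJ oU.
apply: (@proj_open_back X n (Ordinal n0)).
move: (sY J (fun j => [set M : 'rV[X]_n | U j (M ord0 (Ordinal n0))]) cJ
  (fun j => @rproj_open X n (Ordinal n0) (U j) (oU j))).
congr open; apply/seteqP; split => M /= h i _; exact: h.
Qed.


Lemma tuple_code (T : Type) (t0 : T) (F : T -> T -> T) :
  (forall x y x' y', F x y = F x' y' -> x = x' /\ y = y') ->
  forall n, exists dec : T -> ('I_n -> T), forall a, exists k, dec k = a.
Proof.
move=> Finj n.
have encs : forall s s' : seq T, size s = size s' ->
    foldr F t0 s = foldr F t0 s' -> s = s'.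
  elim=> [|x s IH] [|x' s'] //= [es] /Finj [-> /IH ->] //.
pose enc (a : 'I_n -> T) := foldr F t0 (map a (enum 'I_n)).
have encinj a b : enc a = enc b -> a = b.
  move=> /encs; rewrite !size_map => /(_ erefl) /eq_in_map eab.
  by apply: funext => i; apply: eab; rewrite mem_enum.
exists (fun k => epick (fun _ => t0) (fun a => enc a = k)) => a.
exists (enc a); apply: encinj.
by apply: (epickP (fun _ => t0) (fun b => enc b = enc a)); exists a.
Qed.

Definition box {X : topologicalType} {n} (W : 'I_n -> set X) : set 'rV[X]_n :=
  [set M | forall k, W k (M ord0 k)].

Lemma box_open (X : topologicalType) n (W : 'I_n -> set X) :
  (forall k, open (W k)) -> open (box W).
Proof.
move=> oW; rewrite openE => M hM; rewrite /interior /=; apply/rv_nbhs.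
exists W; split => // k; apply: open_nbhs_nbhs; split => //; exact: hM.
Qed.

Lemma box_closed (X : topologicalType) n (W : 'I_n -> set X) :
  (forall k, closed (W k)) -> closed (box W).
Proof.
move=> cW; rewrite -openC openE => M hM.
have [k nk] : exists k, ~ W k (M ord0 k).
  by apply: contrapT => /forallNP hk; apply: hM => k; apply: contrapT; apply: hk.
have o := @rproj_open X n k (~` W k); rewrite openC in o; have := o (cW k).
rewrite openE => /(_ M nk); rewrite /interior /=.
by apply: filterS => N hN hb; apply: hN; apply: hb.
Qed.

Lemma rv_basis (X : topologicalType) (K : Type) n (dec : K -> ('I_n -> K)) :
  (forall a, exists k, dec k = a) ->
  has_discrete_clopen_basis X K -> has_discrete_clopen_basis 'rV[X]_n K.
Proof.
move=> decS [B [Bd [Bc [Bo Bb]]]].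
exists (fun a => [set V | exists W : 'I_n -> set X,
  (forall k, B (dec a k) (W k)) /\ V = box W]).
split; [|split].
- move=> a M.
  have : forall k, exists V : set X, nbhs (M ord0 k) V /\
      (forall A B0, B (dec a k) A -> B (dec a k) B0 -> A `&` V !=set0 ->
        B0 `&` V !=set0 -> A = B0).
    by move=> k; apply: Bd.
  move/choice => [V hV].
  exists (box V); split.
    by apply/rv_nbhs; exists V; split => // k; exact: (hV k).1.
  move=> _ _ [W1 [hW1 ->]] [W2 [hW2 ->]] [N1 [h1 h1v]] [N2 [h2 h2v]].
  congr box; apply: funext => k.
  apply: (hV k).2 => //.
    by exists (N1 ord0 k); split; [exact: h1|exact: h1v].
  by exists (N2 ord0 k); split; [exact: h2|exact: h2v].
- move=> a _ [W [hW ->]]; split.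
    by apply: box_open => k; exact: (Bc _ _ (hW k)).1.
  by apply: box_closed => k; exact: (Bc _ _ (hW k)).2.
- split.
    move=> _ [a _ [W [hW ->]]]; apply: box_open => k; exact: (Bc _ _ (hW k)).1.
  move=> M A /rv_nbhs [P [hP sub]].
  have : forall k, exists p : K * set X, [/\ B p.1 p.2, p.2 (M ord0 k) &
      p.2 `<=` P k].
    move=> k; have := Bb (M ord0 k) (P k) (hP k).
    by move=> [U [[a _ BU] UM] UP]; exists (a, U).
  move/choice => [f hf].
  have [a ha] := decS (fun k => (f k).1).
  exists (box (fun k => (f k).2)).
    split; last by move=> k; have [] := hf k.
    exists a => //; exists (fun k => (f k).2); split => // k.
    by rewrite ha; have [] := hf k.
  move=> N hN; apply: sub => k; have [_ _] := hf k; apply; exact: hN.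
Qed.


Local Close Scope classical_set_scope.

(* X^n is the type 'rV[X]_n of row vectors with the product (matrix) topology. *)
Theorem lemma2p3 (X : topologicalType) (K : Type) :
  tychonoff_space X -> ~ discrete_top X ->
  pnumber_is X K -> has_discrete_clopen_basis X K ->
  forall n : nat, (0 < n)%N ->
    pnumber_is 'rV[X]_n K /\ has_discrete_clopen_basis 'rV[X]_n K.
Proof.
move=> _ nd pX bX n n0.
have [e einj] := @K_infinite X K nd pX.
have [F Finj] := @hessenberg K e einj.
have [dec decS] := @tuple_code K (e 0%N) F Finj n.
split; last exact: (@rv_basis X K n dec decS bX).
case: pX => _ /(_ nd) [sX mX].
split; first by move=> /(@rv_not_discrete X n n0 nd).
move=> _; split; first exact: (@rv_small X K n sX).
move=> K' lt sY; apply: (mX K' lt); exact: (@rv_max X K' n n0 sY).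
Qed.
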